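(* If $\dot G\in\mathcal C_1\cup\mathcal C_4\cup\mathcal C_5$ is a connected, non-complete, $5$-regular and $1$ net-regular SRSG with parameters $(n,5,a,b,c)$, then $(a,b)\neq(0,2)$ and $(a,b)\neq(-2,0)$.
   Context: A signed graph $\dot G=(G,\sigma)$ is a simple graph $G$ with $\sigma:E(G)\to\{\pm1\}$; adjacency matrix $A_{\dot G}$ has entries $\sigma(v_iv_j)$ for adjacent vertices and $0$ otherwise. Degree and connectedness refer to $G$; net-degree is $d^+(v)-d^-(v)$; $\rho$ net-regular means all net-degrees equal $\rho$. $\dot G$ on $n$ vertices is an SRSG if it is neither homogeneous complete nor edgeless and there are $r\in\mathbb N$, $a,b,c\in\mathbb Z$ with $(A^2_{\dot G})_{ii}=r$, $(A^2_{\dot G})_{ij}=a$ for positive edges, $b$ for negative edges, $c$ for distinct non-adjacent pairs; parameters $(n,r,a,b,c)$. Classes: $\mathcal C_1$: $a=-b$ and (complete, or non-complete with $c\neq0$); $\mathcal C_4$: $a\ne-b$, non-complete, $c=0$; $\mathcal C_5$: $a\neq-b$, non-complete, $c\notin\{0,\frac{a+b}{2}\}$. *)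

(* Defs.v *)
From mathcomp Require Import all_boot all_order all_algebra.
Set Implicit Arguments. Unset Strict Implicit. Unset Printing Implicit Defensive.
Import Order.TTheory GRing.Theory Num.Theory.
Local Open Scope ring_scope.

(* A signed graph on the finite vertex type T: a simple graph given by the
   adjacency relation [e] (symmetric, irreflexive) and a signature [s]
   ([s x y = true] means the edge xy is positive, [false] negative). *)
Definition signed_graph (T : finType) (e : rel T) (s : T -> T -> bool) : Prop :=
  symmetric e /\ irreflexive e /\ (forall x y, e x y -> s x y = s y x).

Definition sadj (T : finType) (e : rel T) (s : T -> T -> bool) (x y : T) : int :=
  if e x y then (if s x y then 1 else -1) else 0.

Definition sadj2 (T : finType) (e : rel T) (s : T -> T -> bool) (x y : T) : int :=
  \sum_(z : T) sadj e s x z * sadj e s z y.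

Definition sg_complete (T : finType) (e : rel T) : Prop :=
  forall x y, x != y -> e x y.

Definition sg_edgeless (T : finType) (e : rel T) : Prop :=
  forall x y, ~~ e x y.

Definition sg_homogeneous_complete (T : finType) (e : rel T) (s : T -> T -> bool) : Prop :=
  sg_complete e /\
  ((forall x y, e x y -> s x y = true) \/ (forall x y, e x y -> s x y = false)).

Definition sg_connected (T : finType) (e : rel T) : Prop :=
  forall x y, connect e x y.

Definition sdegree (T : finType) (e : rel T) (x : T) : nat := #|[set y | e x y]|.

Definition net_degree (T : finType) (e : rel T) (s : T -> T -> bool) (x : T) : int :=
  (#|[set y | e x y && s x y]|)%:Z - (#|[set y | e x y && ~~ s x y]|)%:Z.

Definition SRSG (T : finType) (e : rel T) (s : T -> T -> bool)
    (n r : nat) (a b c : int) : Prop :=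
  #|T| = n /\
  ~ sg_homogeneous_complete e s /\
  ~ sg_edgeless e /\
  (forall x, sadj2 e s x x = r%:Z) /\
  (forall x y, e x y -> s x y -> sadj2 e s x y = a) /\
  (forall x y, e x y -> ~~ s x y -> sadj2 e s x y = b) /\
  (forall x y, x != y -> ~~ e x y -> sadj2 e s x y = c).

Definition class_C1 (T : finType) (e : rel T) (a b c : int) : Prop :=
  a = - b /\ (sg_complete e \/ (~ sg_complete e /\ c <> 0)).

Definition class_C4 (T : finType) (e : rel T) (a b c : int) : Prop :=
  a <> - b /\ ~ sg_complete e /\ c = 0.

(* c notin {0, (a+b)/2}; the second condition is written 2c <> a+b *)
Definition class_C5 (T : finType) (e : rel T) (a b c : int) : Prop :=
  a <> - b /\ ~ sg_complete e /\ c <> 0 /\ c *+ 2 <> a + b.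

(* Main.v *)
Require Import Defs.
From mathcomp Require Import all_boot all_order all_algebra zify.
Import Order.TTheory GRing.Theory Num.Theory.
Local Open Scope ring_scope.

Lemma tri (i j k : nat) : i != j -> j != k -> k != i ->
  (((i<j)&&(i<k)) + ((j<k)&&(j<i)) + ((k<i)&&(k<j)) = 1)%N.
Proof.
move=> /eqP ? /eqP ? /eqP ?.
case: (ltnP i j); case: (ltnP i k); case: (ltnP j k); case: (ltnP j i); case: (ltnP k i); case: (ltnP k j) => //=; lia.
Qed.

Lemma sum_rot (T : finType) (H : T -> T -> T -> int) :
  \sum_x \sum_y \sum_z H y z x = \sum_x \sum_y \sum_z H x y z.
Proof.
rewrite exchange_big /=. apply: eq_bigr => y _.
by rewrite exchange_big.
Qed.

Lemma triple3 (T : finType) (f : T -> T -> T -> int) :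
  (forall x y z, f x y z = f y z x) ->
  (forall x y z, f x y z != 0 -> [/\ x != y, y != z & z != x]) ->
  exists k : int, \sum_x \sum_y \sum_z f x y z = 3 * k.
Proof.
move=> Hr Hd.
pose r := fun x : T => nat_of_ord (enum_rank x).
pose g := fun x y z => f x y z * (((r x < r y) && (r x < r z))%N)%:R.
exists (\sum_x \sum_y \sum_z g x y z).
have E : forall x y z, f x y z = g x y z + g y z x + g z x y.
  move=> x y z; rewrite /g /=; have h1 := Hr x y z; have h2 := Hr z x y; rewrite h2 -h1.
  have [->|nz] := eqVneq (f x y z) 0; first by rewrite !mul0r !addr0.
  case: (Hd _ _ _ nz) => nxy nyz nzx.
  have rinj : forall u v, u != v -> r u != r v.
    by move=> u v; apply: contra => /eqP h; apply/eqP; apply: enum_rank_inj; apply: val_inj.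
  by rewrite -!mulrDr -!natrD tri ?rinj // mulr1.
under eq_bigr do under eq_bigr do under eq_bigr do rewrite E.
rewrite (eq_bigr (fun x => \sum_y \sum_z g x y z + \sum_y \sum_z g y z x + \sum_y \sum_z g z x y)); last first.
  by move=> x _; rewrite -!big_split; apply: eq_bigr => y _; rewrite -!big_split.
rewrite !big_split /= sum_rot.
rewrite (@sum_rot _ (fun a b c => g b c a)) sum_rot.
set S := (X in X + X + X); lia.
Qed.
Lemma sum_ind (T:finType) (P : pred T) : \sum_(y:T) ((P y)%:R : int) = (#|[set y | P y]|)%:R.
Proof.
rewrite (eq_bigr (fun y => if P y then 1 else 0)); last by move=> y _; case: (P y).
by rewrite -big_mkcond /= sumr_const cardsE.
Qed.

Lemma sum_eq1 (T : finType) (x : T) : \sum_(y:T) (((y == x) : bool)%:R : int) = 1.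
Proof.
have := @sum_ind _ (fun y => y == x) => /= ->.
have -> : [set y | y == x] = [set x] by apply/setP=> y; rewrite !inE.
by rewrite cards1.
Qed.

Theorem lemma3p8 (T : finType) (e : rel T) (s : T -> T -> bool)
    (n : nat) (a b c : int) :
  signed_graph e s ->
  SRSG e s n 5 a b c ->
  (class_C1 e a b c \/ class_C4 e a b c \/ class_C5 e a b c) ->
  sg_connected e ->
  ~ sg_complete e ->
  (forall x, sdegree e x = 5%N) ->
  (forall x, net_degree e s x = 1) ->
  (a, b) <> (0, 2) /\ (a, b) <> (-2, 0).
Proof.
move=> [esy [eirr sS]] [cardT [_ [nedge [Hr [Ha [Hb Hc]]]]]] _ _ ncomp Hdeg Hnet.
have Asym : forall x y, sadj e s x y = sadj e s y x.
  move=> x y; rewrite /sadj esy; case Exy: (e y x) => //.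
  by rewrite sS // esy.
have Axx : forall x, sadj e s x x = 0 by move=> x; rewrite /sadj eirr.
have A2sym : forall x y, sadj2 e s x y = sadj2 e s y x.
  move=> x y; rewrite /sadj2; apply: eq_bigr => z _.
  by rewrite mulrC (Asym z y) (Asym x z).
have cnt : forall x, (#|[set y | e x y && s x y]|)%:R = 3 :> int /\
                     (#|[set y | e x y && ~~ s x y]|)%:R = 2 :> int.
  move=> x; have h1 := Hdeg x; have h2 := Hnet x.
  rewrite /sdegree in h1; rewrite /net_degree in h2.
  have E : (#|[set y | e x y]|)%:R = (#|[set y | e x y && s x y]|)%:R + (#|[set y | e x y && ~~ s x y]|)%:R :> int.
    rewrite -!sum_ind -big_split /=; apply: eq_bigr => y _; by case: (e x y); case: (s x y).
  rewrite h1 in E. move: E h2. rewrite !natz. lia.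
have row1 : forall x, \sum_y sadj e s x y = 1.
  move=> x; have h2 := Hnet x; rewrite /net_degree in h2.
  rewrite (eq_bigr (fun y => ((e x y && s x y)%:R - (e x y && ~~ s x y)%:R : int))); last first.
    by move=> y _; rewrite /sadj; case: (e x y); case: (s x y).
  by rewrite sumrB !sum_ind !natz.
have row2 : forall x, \sum_y sadj2 e s x y = 1.
  move=> x; rewrite /sadj2 exchange_big /=.
  rewrite -(row1 x); apply: eq_bigr => z _.
  by rewrite -mulr_sumr row1 mulr1.
have key : forall x : T, c * (n%:Z - 6) = -4 - 3 * a - 2 * b.
  move=> x; have := row2 x.
  rewrite (eq_bigr (fun y => c + (5 - c) * (y == x)%:R + (a - c) * (e x y && s x y)%:R
                         + (b - c) * (e x y && ~~ s x y)%:R)); last first.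
    move=> y _; have [->|nyx] := eqVneq y x.
      by rewrite eirr Hr /=; lia.
    case Exy: (e x y) => /=.
      case Sxy: (s x y) => /=.
        rewrite (Ha x y) //; lia.
      rewrite (Hb x y) ?Sxy //; lia.
    rewrite (Hc x y) ?Exy // 1?eq_sym //; lia.
  rewrite !big_split /= sumr_const -!mulr_sumr sum_eq1 !sum_ind.
  have [c1 c2] := cnt x. rewrite c1 c2 cardT -mulr_natr natz. lia.
have [x0 [y0 [nxy0 nexy0]]] : exists x y, x != y /\ ~~ e x y.
  case: (boolP [exists x, exists y, (x != y) && ~~ e x y]).
    by move=> /existsP [x /existsP [y /andP [h1 h2]]]; exists x, y.
  move=> /negP H; exfalso; apply: ncomp => x y nxy; apply/negPn/negP => nexy.
  by apply: H; apply/existsP; exists x; apply/existsP; exists y; rewrite nxy.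
split; move=> [] Ea Eb; rewrite Ea Eb in Ha Hb key.
-
  have tr : \sum_x \sum_y \sum_z (sadj e s x y * (sadj e s y z * sadj e s z x)) = (-4) *+ #|T|.
    rewrite -sumr_const; apply: eq_bigr => x _.
    transitivity (\sum_y sadj e s x y * sadj2 e s y x).
      by apply: eq_bigr => y _; rewrite /sadj2 mulr_sumr.
    rewrite (eq_bigr (fun y => 0 * (e x y && s x y)%:R - 2 * (e x y && ~~ s x y)%:R)).
      rewrite sumrB -!mulr_sumr !sum_ind; have [c1 c2] := cnt x; rewrite c1 c2; lia.
    move=> y _; rewrite A2sym /sadj. case Exy: (e x y) => /=; last by rewrite mul0r; lia.
    case Sxy: (s x y) => /=.
      by rewrite (Ha x y) // ?Sxy; lia.
    by rewrite (Hb x y) ?Sxy //; lia.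
  have [k hk] : exists k : int, \sum_x \sum_y \sum_z (sadj e s x y * (sadj e s y z * sadj e s z x)) = 3 * k.
    apply: (@triple3 T (fun x y z => sadj e s x y * (sadj e s y z * sadj e s z x))).
      by move=> x y z; rewrite mulrC -mulrA.
    move=> x y z nz.
    move: nz; case: (eqVneq x y) => [->|nxy]; first by rewrite Axx !(mul0r,mulr0) eqxx.
    case: (eqVneq y z) => [->|nyz]; first by rewrite Axx !(mul0r,mulr0) eqxx.
    case: (eqVneq z x) => [->|nzx]; first by rewrite Axx !(mul0r,mulr0) eqxx.
    by [].
  rewrite tr cardT -mulr_natr natz in hk.
  have k3 := key x0.
  have hn : n%:Z = 3 * (- k - n%:Z) by lia.
  rewrite hn in k3. lia.
-
  have k2 := key x0.
  have n6 : (6 <= n)%N.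
    have h1 := Hdeg x0; rewrite /sdegree in h1.
    have : (#|[set y | e x0 y]| <= #|[set~ x0]|)%N.
      apply: subset_leq_card; apply/subsetP => y; rewrite !inE; apply: contraL => /eqP ->.
      by rewrite eirr.
    rewrite h1 cardsC1 cardT; lia.
  have par : forall x y, exists K : int,
      sadj2 e s x y = (#|[set z | e x z && e z y]|)%:R - 2 * K.
    move=> x y; exists (#|[set z | e x z && e z y && (s x z != s z y)]|)%:R.
    rewrite -!sum_ind mulr_sumr -sumrB /sadj2; apply: eq_bigr => z _; rewrite /sadj.
    by case: (e x z); case: (e z y); case: (s x z); case: (s z y).
  have cbd : forall x y, x != y -> ~~ e x y ->
      [/\ (12 <= n + #|[set z | e x z && e z y]|)%N,
          [set z | e x z && e z y] \subset [set z | e x z] &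
          [set z | e x z && e z y] \subset [set z | e y z]].
    move=> x y nxy nexy.
    have Hs1 : [set z | e x z && e z y] \subset [set z | e x z].
      by apply/subsetP => z; rewrite !inE => /andP [].
    have Hs2 : [set z | e x z && e z y] \subset [set z | e y z].
      by apply/subsetP => z; rewrite !inE (esy y z) => /andP [].
    split => //.
    have U := cardsUI [set z | e x z] [set z | e y z].
    have -> : [set z | e x z && e z y] = [set z | e x z] :&: [set z | e y z].
      by apply/setP => z; rewrite !inE (esy z y).
    have : (#|[set z | e x z] :|: [set z | e y z]| <= #|[set~ x] :\ y|)%N.
      apply: subset_leq_card; apply/subsetP => z; rewrite !inE.
      case/orP => E.
        apply/andP; split; apply/negP => /eqP Ez; subst z.
          by rewrite (negbTE nexy) in E.
        by rewrite eirr in E.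
      apply/andP; split; apply/negP => /eqP Ez; subst z.
        by rewrite eirr in E.
      by rewrite esy (negbTE nexy) in E.
    have cd := cardsD1 y [set~ x].
    rewrite !inE eq_sym nxy cardsC1 cardT /= in cd.
    have h1 := Hdeg x; have h2 := Hdeg y; rewrite /sdegree in h1 h2.
    rewrite h1 h2 in U. lia.
  have n7 : (7 <= n)%N.
    case: (ltngtP n 6) => [|//|E]; first lia.
    by rewrite E in k2; lia.
  have cases : (n = 7 /\ c = 2) \/ (n = 8 /\ c = 1).
    have : c * (n%:Z - 6) = 2 by lia.
    move: n7; clear; move=> n7.
    have m1 : 1 <= n%:Z - 6 by lia.
    have [m hm] : exists m, m = n%:Z - 6 by eauto.
    rewrite -hm in m1 *; move=> H.
    have cp : 1 <= c by nia.
    have m2 : m <= 2 by nia.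
    have : m = 1 \/ m = 2 by lia.
    case=> Em; rewrite Em in H; lia.
  case: cases => [[En Ec] | [En Ec]].
  + have [K hK] := par x0 y0.
    have [h12 hs1 _] := cbd x0 y0 nxy0 nexy0.
    have hle := subset_leq_card hs1.
    have h1 := Hdeg x0; rewrite /sdegree in h1. rewrite h1 in hle.
    rewrite (Hc x0 y0 nxy0 nexy0) Ec in hK.
    rewrite En in h12.
    have E5 : #|[set z | e x0 z && e z y0]| = 5%N by lia.
    rewrite E5 natz in hK; lia.
  + have NE : forall x y, x != y -> ~~ e x y -> forall z, e x z = e y z.
      move=> x y nxy nexy.
      have [K hK] := par x y.
      have [h12 hs1 hs2] := cbd x y nxy nexy.
      have h1 := Hdeg x; have h2 := Hdeg y; rewrite /sdegree in h1 h2.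
      have l1 := subset_leq_card hs1; have l2 := subset_leq_card hs2.
      rewrite (Hc x y nxy nexy) Ec in hK. rewrite En in h12. rewrite h1 in l1.
      have E5 : #|[set z | e x z && e z y]| = 5%N.
        have : (#|[set z | e x z && e z y]| = 4 \/ #|[set z | e x z && e z y]| = 5)%N by lia.
        by case=> E //; rewrite E natz in hK; lia.
      have e1 : [set z | e x z && e z y] = [set z | e x z].
        by apply/eqP; rewrite eqEcard hs1 h1 E5.
      have e2 : [set z | e x z && e z y] = [set z | e y z].
        by apply/eqP; rewrite eqEcard hs2 h2 E5.
      move=> z; have E := etrans (esym e1) e2; move/setP: E => /(_ z); by rewrite !inE.
    have O2 : forall x, (#|[set y | (y != x) && ~~ e x y]|)%:R = 2 :> int.
      move=> x. have h1 := Hdeg x; rewrite /sdegree in h1.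
      have : (\sum_(y:T) (1:int)) = \sum_y ((y == x)%:R + (e x y)%:R + ((y != x) && ~~ e x y)%:R).
        apply: eq_bigr => y _; case: (eqVneq y x) => [->|nyx]; first by rewrite eirr.
        by case: (e x y).
      rewrite !big_split /= sum_eq1 !sum_ind sumr_const cardT h1 En !natz. lia.
    have inner : forall x, \sum_y \sum_z (((x != y) && (y != z) && (z != x) && ~~ e x y && ~~ e y z && ~~ e z x)%:R : int) = 2.
      move=> x.
      transitivity (\sum_(y:T) \sum_(z:T) (((y != x) && ~~ e x y)%:R * ((z != x) && ~~ e x z)%:R - ((y != x) && ~~ e x y)%:R * ((z == y)%:R) : int)).
        apply: eq_bigr => y _; apply: eq_bigr => z _.
        case: (eqVneq z y) => [->|nzy].
          by case: (x != y); case: (y != x); case: (e x y).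
        rewrite mulr0n mulr0 subr0 (eq_sym x y) (esy z x) /=.
        case Hyx: (y != x); case Exy: (e x y); case Hzx: (z != x); case Exz: (e x z) => //=;
        rewrite -(NE x y) ?Exz ?Exy //= eq_sym ?Hyx //.
      rewrite (eq_bigr (fun y => ((y != x) && ~~ e x y)%:R)); last first.
        move=> y _; rewrite sumrB -!mulr_sumr sum_eq1 sum_ind (O2 x) mulr1; by case: ((y != x) && ~~ e x y).
      by rewrite sum_ind O2.
    have [k hk] : exists k : int, \sum_x \sum_y \sum_z (((x != y) && (y != z) && (z != x) && ~~ e x y && ~~ e y z && ~~ e z x)%:R : int) = 3 * k.
      apply: (@triple3 T (fun x y z => (((x != y) && (y != z) && (z != x) && ~~ e x y && ~~ e y z && ~~ e z x)%:R : int))).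
        by move=> x y z; case: (x != y); case: (y != z); case: (z != x); case: (e x y); case: (e y z); case: (e z x).
      move=> x y z.
      case: (eqVneq x y) => [->|nxy]; first by rewrite eqxx.
      case: (eqVneq y z) => [->|nyz]; first by rewrite eqxx /= ?(andbF, andFb).
      case: (eqVneq z x) => [->|nzx]; first by rewrite eqxx /= ?(andbF, andFb).
      by [].
    rewrite (eq_bigr (fun _ => 2)) in hk; last by move=> x _; apply: inner.
    rewrite sumr_const cardT En in hk. lia.
Qed.
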